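(* Let $C$ be a computad, $d\ge1$, and $c\in\mathrm{Cell}_d(C)$ a $d$-cell with $\mathrm{supp}_d(c)=\emptyset$. Then $\mathrm{supp}_{d-1}(\mathrm{src}\,c)=\mathrm{supp}_{d-1}(\mathrm{tgt}\,c)=\mathrm{supp}_{d-1}(c)$.
   Context: Computads (Dean et al.) are defined by induction on dimension together with their cells: an $n$-computad consists of an $(n-1)$-computad, a set $V_n$ of $n$-dimensional generators, and an attaching function sending each $v\in V_n$ to a pair of parallel $(n-1)$-cells; a computad is a compatible sequence of $n$-computads. The $n$-cells $\mathrm{Cell}_n(C)$ are generated by (i) $\mathrm{var}\,v$ for $v\in V_n$, with source and target given by the attaching function, (ii) $\mathrm{coh}(B,A,f)$ where $B$ is a Batanin tree with $\dim B\le n$, $A$ is a full $(n-1)$-sphere of the pasting diagram $\mathrm{Pos}(B)$, and $f$ assigns to each $k$-position of $B$ a $k$-cell of $C$ compatibly with sources and targets; its source and target are those of $A$ with $f$ substituted. Support: $\mathrm{supp}_n(\mathrm{var}\,v)=\{v\}$ and $\mathrm{supp}_n(\mathrm{coh}(B,A,f))=\bigcup_{p\in\mathrm{Pos}_n(B)}\mathrm{supp}_n(f(p))$ for an $n$-cell; more generally, for $k\le n$, $\mathrm{supp}_k(c)$ is the set of $k$-dimensional generators used in the definition of $c$ or of its iterated sources and targets. *)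

(* Defs.v *)
(* Computads of Dean et al., encoded as raw
   syntax of cells over a type of generators plus a typing judgement. *)
From mathcomp Require Import all_boot.
Set Implicit Arguments. Unset Strict Implicit. Unset Printing Implicit Defensive.

Inductive tree : Type := br of seq tree.
Definition leaf : tree := br [::].
Definition children (B : tree) : seq tree := let: br Bs := B in Bs.

Fixpoint tdim (B : tree) : nat :=
  match B with
  | br Bs => (fix go (l : seq tree) : nat :=
                match l with [::] => 0 | B' :: l' => maxn (tdim B').+1 (go l') end) Bs
  end.

(* ---------- Positions of a tree (the generators of the computad Pos(B)) ----------
   br [B_0;...;B_{n-1}] has 0-positions (points) [:: j], 0 <= j <= n, and
   (k+1)-positions  i :: q  with i < n and q a k-position of B_i
   (Pos_{k+1}(B) = coproduct of the Pos_k(B_i)). *)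
Definition pos := seq nat.
Definition pdim (p : pos) : nat := (size p).-1.

Fixpoint posB (B : tree) (p : pos) {struct p} : bool :=
  match p with
  | [::] => false
  | [:: j] => j <= size (children B)
  | i :: q => (i < size (children B)) && posB (nth leaf (children B) i) q
  end.

(* source and target of a position of dimension >= 1; the 1-position
   [:: i; j] (j-th point of B_i) goes from point i to point i+1 *)
Fixpoint psrc (p : pos) : pos :=
  match p with
  | [:: i; _] => [:: i]
  | i :: q => i :: psrc q
  | [::] => [::]
  end.
Fixpoint ptgt (p : pos) : pos :=
  match p with
  | [:: i; _] => [:: i.+1]
  | i :: q => i :: ptgt q
  | [::] => [::]
  end.

(* positions in the k-dimensional source (sg = false) / target (sg = true)
   boundary of B *)
Fixpoint bdry (sg : bool) (k : nat) (B : tree) (p : pos) {struct p} : bool :=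
  match p with
  | [::] => false
  | [:: j] => if k is 0 then j == (if sg then size (children B) else 0)
              else j <= size (children B)
  | i :: q => if k is k'.+1
              then (i < size (children B)) && bdry sg k' (nth leaf (children B) i) q
              else false
  end.

Lemma pos0 (B : tree) : posB B [:: 0].
Proof. by []. Qed.

(* ---------- Raw cells over a type of generators G ----------
   coh B s t f : B a tree, (s,t) a sphere (pair of cells) of Pos(B), and
   f assigns a cell of G to each position of B. *)
Inductive cell (G : Type) : Type :=
| var of G
| coh (B : tree) (s t : cell pos) (f : {p : pos | posB B p} -> cell G).
Arguments var {G}.
Arguments coh {G}.

Record Str (G : Type) := MkStr {
  isgen : G -> Prop;
  gdim : G -> nat;
  gsrc : G -> cell G;
  gtgt : G -> cell G }.

Definition PosS (B : tree) : Str pos :=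
  MkStr (fun p => posB B p) pdim (fun p => var (psrc p)) (fun p => var (ptgt p)).

(* value of f at a position (junk value at invalid positions) *)
Definition lookup (G : Type) (B : tree) (f : {p : pos | posB B p} -> cell G)
  (p : pos) : cell G :=
  (if posB B p as b return posB B p = b -> cell G
   then fun h => f (exist _ p h)
   else fun _ => f (exist _ [:: 0] (pos0 B))) (erefl _).

Fixpoint subst (G : Type) (B : tree) (f : {p : pos | posB B p} -> cell G)
  (c : cell pos) : cell G :=
  match c with
  | var p => lookup f p
  | coh B' s t g => coh B' s t (fun q => subst f (g q))
  end.

Definition csrc (G : Type) (S : Str G) (c : cell G) : cell G :=
  match c with var v => gsrc S v | coh B s t f => subst f s end.
Definition ctgt (G : Type) (S : Str G) (c : cell G) : cell G :=
  match c with var v => gtgt S v | coh B s t f => subst f t end.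

Fixpoint tsupp (G : Type) (c : cell G) : G -> Prop :=
  match c with
  | var v => fun w => w = v
  | coh B s t f => fun w => exists p, tsupp (f p) w
  end.

Fixpoint iterb (G : Type) (S : Str G) (m : nat) (c b : cell G) : Prop :=
  match m with
  | 0 => b = c
  | m'.+1 => iterb S m' (csrc S c) b \/ iterb S m' (ctgt S c) b
  end.

(* supp_k(c) for an n-cell c: the k-dimensional generators used in the
   definition of c or of its iterated sources and targets *)
Definition supp (G : Type) (S : Str G) (n k : nat) (c : cell G) (v : G) : Prop :=
  isgen S v /\ gdim S v = k /\
  exists m, m <= n - k /\ exists b, iterb S m c b /\ tsupp b v.

Definition parallel (G : Type) (S : Str G) (n : nat) (a b : cell G) : Prop :=
  1 <= n -> csrc S a = csrc S b /\ ctgt S a = ctgt S b.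

(* (s,t) (a k-sphere of Pos(B)) is full: supp s = boundary^-_k B and
   supp t = boundary^+_k B (supports in all dimensions) *)
Definition fullsphere (B : tree) (k : nat) (s t : cell pos) : Prop :=
  forall p : pos,
    ((exists j, supp (PosS B) k j s p) <-> bdry false k B p) /\
    ((exists j, supp (PosS B) k j t p) <-> bdry true k B p).

Inductive IsCell : forall (G : Type), Str G -> nat -> cell G -> Prop :=
| IsVar (G : Type) (S : Str G) (n : nat) (v : G) :
    isgen S v -> gdim S v = n -> IsCell S n (var v)
| IsCoh (G : Type) (S : Str G) (n : nat) (B : tree) (s t : cell pos)
    (f : {p : pos | posB B p} -> cell G) :
    1 <= n -> tdim B <= n ->
    IsCell (PosS B) n.-1 s -> IsCell (PosS B) n.-1 t ->
    parallel (PosS B) n.-1 s t ->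
    fullsphere B n.-1 s t ->
    (forall p, IsCell S (pdim (sval p)) (f p)) ->
    (forall p hp hq, 1 <= pdim p ->
        csrc S (f (exist _ p hp)) = f (exist _ (psrc p) hq)) ->
    (forall p hp hq, 1 <= pdim p ->
        ctgt S (f (exist _ p hp)) = f (exist _ (ptgt p) hq)) ->
    IsCell S n (coh B s t f).

Definition wfS (G : Type) (S : Str G) : Prop :=
  forall v n, isgen S v -> gdim S v = n.+1 ->
    IsCell S n (gsrc S v) /\ IsCell S n (gtgt S v) /\
    parallel S n (gsrc S v) (gtgt S v).

(* Main.v *)
Require Import Defs.
From mathcomp Require Import all_boot.
Set Implicit Arguments. Unset Strict Implicit.

Definition cellpos_ind (P : cell pos -> Prop) (Hv : forall p, P (var p))
  (Hc : forall B s t g, (forall q, P (g q)) -> P (coh B s t g)) : forall c, P c :=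
  fix F c := match c with var p => Hv p | coh B s t g => Hc B s t g (fun q => F (g q)) end.

Lemma tsupp_subst G B (f : {p | posB B p} -> cell G) (s : cell pos) v :
  tsupp (subst f s) v <-> exists p, tsupp s p /\ tsupp (lookup f p) v.
Proof.
elim/cellpos_ind: s => [p | B' s' t' g IH] /=.
  split; [move=> h; exists p; by split | by case=> p' [-> ]].
split.
  case=> q /IH [p [h1 h2]]. exists p; split => //; by exists q.
case=> p [[q hq] h]. exists q. apply/IH. by exists p.
Qed.

Lemma lookup_eq G B (f : {p | posB B p} -> cell G) p (hp : posB B p) :
  lookup f p = f (exist _ p hp).
Proof.
rewrite /lookup. move: (erefl (posB B p)).
case: {2 3}(posB B p) => e.
  by rewrite (eq_irrelevance e hp).
by rewrite hp in e.
Qed.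

Fixpoint pathok (B : tree) (pre : pos) : bool :=
  match pre with [::] => true | i :: q => (i < size (children B)) && pathok (nth leaf (children B) i) q end.
Fixpoint sub (B : tree) (pre : pos) : tree :=
  match pre with [::] => B | i :: q => sub (nth leaf (children B) i) q end.

Lemma posB_rcons B pre j :
  posB B (rcons pre j) = pathok B pre && (j <= size (children (sub B pre))).
Proof.
elim: pre B => [|i pre IH] B //=.
case E: (rcons pre j) => [|x r]; first by case: pre E IH.
by rewrite -E IH andbA.
Qed.

Lemma bdry_rcons sg B pre j :
  bdry sg (size pre) B (rcons pre j) =
  pathok B pre && (j == if sg then size (children (sub B pre)) else 0).
Proof.
elim: pre B => [|i pre IH] B //=.
case E: (rcons pre j) => [|x r]; first by case: pre E IH.
by rewrite -E IH andbA.
Qed.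

Lemma pathok_rcons B pre a :
  pathok B (rcons pre a) = pathok B pre && (a < size (children (sub B pre))).
Proof.
elim: pre B => [|i pre IH] B /=; first by rewrite andbT.
by rewrite IH andbA.
Qed.

Lemma psrc_cons i q : 2 <= size q -> psrc (i :: q) = i :: psrc q.
Proof. by case: q => [|x [|y r]]. Qed.
Lemma ptgt_cons i q : 2 <= size q -> ptgt (i :: q) = i :: ptgt q.
Proof. by case: q => [|x [|y r]]. Qed.

Lemma psrc_rcons pre a b : psrc (rcons (rcons pre a) b) = rcons pre a.
Proof.
elim: pre => [|i pre IH] //. rewrite rcons_cons psrc_cons ?IH // !size_rcons //.
Qed.
Lemma ptgt_rcons pre a b : ptgt (rcons (rcons pre a) b) = rcons pre a.+1.
Proof.
elim: pre => [|i pre IH] //. rewrite rcons_cons ptgt_cons ?IH // !size_rcons //.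
Qed.

Lemma tdim_nth Bs i : i < size Bs -> (tdim (nth leaf Bs i)).+1 <= tdim (br Bs).
Proof.
elim: Bs i => [|B' Bs IH] [|i] //=.
  move=> _. exact: leq_maxl.
move=> h. apply: leq_trans (IH i h) _. exact: leq_maxr.
Qed.

Lemma posB_dim B p : posB B p -> pdim p <= tdim B.
Proof.
elim: p B => [|i q IH] B //=.
case: q IH => [|x r] IH //.
case/andP=> hi hq. have := IH _ hq. rewrite /pdim /= => h.
case: B hi hq h => Bs /= hi hq h.
apply: leq_trans (tdim_nth hi). by [].
Qed.

Lemma cell_dim G (S : Str G) n c : IsCell S n c ->
  forall v, tsupp c v -> isgen S v /\ gdim S v <= n.
Proof.
elim => {G S n c}.
  by move=> G S n v gv dv w /= ->; rewrite dv.
move=> G S n B s t f n1 hB _ _ _ _ _ _ _ IHf _ _ v [[p hp] h].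
have [g1 g2] := IHf _ _ h. split => //.
apply: leq_trans g2 _. apply: leq_trans hB. exact: posB_dim.
Qed.

Lemma tsupp_bd G (S : Str G) n c : IsCell S n c ->
  (forall w, isgen S w -> gdim S w = n -> ~ tsupp c w) ->
  forall v, (tsupp (csrc S c) v \/ tsupp (ctgt S c) v) -> tsupp c v.
Proof.
elim => {G S n c}.
  move=> G S n v gv dv H. by case: (H v gv dv erefl).
move=> G S n B s t f _ _ Hs _ Ht _ _ _ _ _ _ _ _ v /=.
have H : forall u, IsCell (PosS B) n.-1 u ->
   tsupp (subst f u) v -> exists p, tsupp (f p) v.
  move=> u Hu /tsupp_subst [p [h1 h2]].
  have [gp _] := cell_dim Hu h1.
  exists (exist _ p gp). by rewrite -(lookup_eq f gp).
case=> h; [exact: (H s) | exact: (H t)].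
Qed.

Lemma psrc_ok B p : posB B p -> 1 <= pdim p ->
  posB B (psrc p) /\ pdim (psrc p) = (pdim p).-1.
Proof.
case/lastP: p => [|p' b] //. case/lastP: p' => [|pre a] //.
rewrite psrc_rcons /pdim !size_rcons /= posB_rcons pathok_rcons posB_rcons.
case/andP=> /andP[-> h] _ _. by rewrite ltnW.
Qed.

Definition P G (S : Str G) n (c : cell G) : Prop :=
  1 <= n -> (forall w, isgen S w -> gdim S w = n -> ~ tsupp c w) ->
  forall v, isgen S v -> gdim S v = n.-1 -> tsupp c v ->
  tsupp (csrc S c) v /\ tsupp (ctgt S c) v.

Lemma main G (S : Str G) n c : IsCell S n c -> P S n c.
Proof.
elim => {G S n c}.
  move=> G S n v gv dv n1 H. by case: (H v gv dv erefl).
move=> G S n B s t f n1 hB Hs _ Ht _ _ Hfs Hf IHf Hsrc Htgt _ Hno v gv dv /=.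
pose F := lookup f.
have HF : forall p (hp : posB B p), F p = f (exist _ p hp) by move=> p hp; exact: lookup_eq.
have HFc : forall p, posB B p -> IsCell S (pdim p) (F p).
  move=> p hp. rewrite (HF p hp). exact: (Hf (exist _ p hp)).
have HFno : forall p, posB B p -> forall w, isgen S w -> gdim S w = n -> ~ tsupp (F p) w.
  move=> p hp w g1 g2 h. apply: (Hno w g1 g2). exists (exist _ p hp). by rewrite -HF.
have HFih : forall p, posB B p -> P S (pdim p) (F p).
  move=> p hp. rewrite (HF p hp). exact: (IHf (exist _ p hp)).
have HS : forall q, posB B q -> 1 <= pdim q -> posB B (psrc q) -> csrc S (F q) = F (psrc q).
  move=> q hq d1 hq'. rewrite (HF q hq) (HF _ hq'). exact: Hsrc.
have HT : forall q, posB B q -> 1 <= pdim q -> posB B (ptgt q) -> ctgt S (F q) = F (ptgt q).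
  move=> q hq d1 hq'. rewrite (HF q hq) (HF _ hq'). exact: Htgt.
have gen : forall u x, IsCell (PosS B) n.-1 u -> tsupp u x -> tsupp (F x) v -> tsupp (subst f u) v.
  move=> u x _ h1 h2. apply/tsupp_subst. by exists x.
have bd : forall sg u pre j, size pre = n.-1 -> pathok B pre ->
    j = (if sg then size (children (sub B pre)) else 0) ->
    (forall p, (exists j, supp (PosS B) n.-1 j u p) <-> bdry sg n.-1 B p) ->
    tsupp u (rcons pre j).
  move=> sg u pre j hs hpre hj Hu.
  have : bdry sg n.-1 B (rcons pre j) by rewrite -hs bdry_rcons hpre hj eqxx.
  move/Hu => [j' [_ [/= dj [m [hm [b [hb ht]]]]]]].
  move: hm; rewrite -dj /pdim size_rcons /= hs subnn leqn0 => /eqP hm.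
  by move: hb; rewrite hm /= => <-.
have qok : forall pre j, pathok B pre -> j < size (children (sub B pre)) ->
    posB B (rcons (rcons pre j) 0).
  move=> pre j h1 h2. by rewrite posB_rcons pathok_rcons h1 h2.
have qdim : forall pre j, size pre = n.-1 -> pdim (rcons (rcons pre j) 0) = n.
  move=> pre j hs. by rewrite /pdim !size_rcons /= hs prednK.
have Ls : forall j pre, size pre = n.-1 -> posB B (rcons pre j) ->
    tsupp (F (rcons pre j)) v -> tsupp (subst f s) v.
  elim=> [|j IH] pre hs hp h.
    apply: (gen s _ Hs _ h). apply: (bd false) => //.
      by move: hp; rewrite posB_rcons => /andP[].
    by move=> p; case: (Hfs p).
  move: hp; rewrite posB_rcons => /andP[h1 h2].
  have hq := qok pre j h1 h2.
  have d1 : 1 <= pdim (rcons (rcons pre j) 0) by rewrite qdim.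
  move: h. rewrite -(ptgt_rcons pre j 0) -HT //; last by rewrite ptgt_rcons posB_rcons h1.
  move=> h.
  have Hc := HFc _ hq. rewrite qdim // in Hc.
  have h' := tsupp_bd Hc (HFno _ hq) (or_intror h).
  have IHq := HFih _ hq. rewrite qdim // in IHq.
  have [hs' _] := IHq n1 (HFno _ hq) v gv dv h'.
  have hps : posB B (psrc (rcons (rcons pre j) 0)) by rewrite psrc_rcons posB_rcons h1 ltnW.
  move: hs'. rewrite HS // psrc_rcons.
  apply: IH => //. by rewrite posB_rcons h1 ltnW.
have Lt : forall k j pre, size pre = n.-1 -> pathok B pre ->
    j + k = size (children (sub B pre)) ->
    tsupp (F (rcons pre j)) v -> tsupp (subst f t) v.
  elim=> [|k IH] j pre hs hpre hk h.
    apply: (gen t _ Ht _ h). apply: (bd true) => //.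
      by rewrite -hk addn0.
    by move=> p; case: (Hfs p).
  have h2 : j < size (children (sub B pre)) by rewrite -hk addnS ltnS leq_addr.
  have hq := qok pre j hpre h2.
  have d1 : 1 <= pdim (rcons (rcons pre j) 0) by rewrite qdim.
  move: h. rewrite -(psrc_rcons pre j 0) -HS //; last by rewrite psrc_rcons posB_rcons hpre ltnW.
  move=> h.
  have Hc := HFc _ hq. rewrite qdim // in Hc.
  have h' := tsupp_bd Hc (HFno _ hq) (or_introl h).
  have IHq := HFih _ hq. rewrite qdim // in IHq.
  have [_ ht'] := IHq n1 (HFno _ hq) v gv dv h'.
  have hpt : posB B (ptgt (rcons (rcons pre j) 0)) by rewrite ptgt_rcons posB_rcons hpre.
  move: ht'. rewrite HT // ptgt_rcons.
  apply: (IH j.+1) => //. by rewrite addSnnS.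
have K1 : forall p, posB B p -> pdim p = n.-1 -> tsupp (F p) v ->
    tsupp (subst f s) v /\ tsupp (subst f t) v.
  case/lastP=> [|pre j] // hp; rewrite /pdim size_rcons /= => hs h.
  split; first exact: (Ls j pre).
  move: hp; rewrite posB_rcons => /andP[h1 h2].
  apply: (Lt (size (children (sub B pre)) - j) j pre) => //.
  by rewrite subnKC.
case=> [[p hp] h]. rewrite -(HF p hp) in h.
have := posB_dim hp => hd.
have [_ gd] := cell_dim (HFc _ hp) h.
rewrite dv in gd.
have : (pdim p == n.-1) || (pdim p == n).
  have aux : forall a m, 0 < m -> a <= m -> m.-1 <= a -> (a == m.-1) || (a == m).
    move=> a [|m] //= _; rewrite leq_eqVlt ltnS => /orP[->|h1] h2; first by rewrite orbT.
    by rewrite eqn_leq h1 h2.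
  exact: aux n1 (leq_trans hd hB) gd.
case/orP=> /eqP e; first exact: (K1 p hp e h).
have d1 : 1 <= pdim p by rewrite e.
have [hp' dp'] := psrc_ok hp d1.
apply: (K1 (psrc p)) => //; first by rewrite dp' e.
rewrite -HS //.
have IHq := HFih _ hp. rewrite e in IHq.
by have [] := IHq n1 (HFno _ hp) v gv dv h.
Qed.

Theorem lemma5p6 (G : Type) (S : Str G) (d : nat) (c : cell G) :
  wfS S -> 1 <= d -> IsCell S d c ->
  (forall v, ~ supp S d d c v) ->
  (forall v, supp S d.-1 d.-1 (csrc S c) v <-> supp S d d.-1 c v) /\
  (forall v, supp S d.-1 d.-1 (ctgt S c) v <-> supp S d d.-1 c v).
Proof.
move=> _ d1 Hc Hno.
have Hno' : forall w, isgen S w -> gdim S w = d -> ~ tsupp c w.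
  move=> w g1 g2 h. apply: (Hno w). split => //; split => //.
  exists 0; split => //. by exists c.
have M := main Hc d1 Hno'.
have B := tsupp_bd Hc Hno'.
have e1 : d - d.-1 = 1 by case: d d1 {Hc Hno Hno' M B} => // d _; rewrite subSnn.
have L : forall v, supp S d d.-1 c v <->
    [/\ isgen S v, gdim S v = d.-1 & (tsupp c v \/ tsupp (csrc S c) v \/ tsupp (ctgt S c) v)].
  move=> v; split.
    case=> g1 [g2 [m [hm [b [hb ht]]]]]. split => //.
    move: hm; rewrite e1; case: m hb => [|[|m]] //= hb _.
      by left; rewrite -hb.
    by right; case: hb => hb; subst b; [left|right].
  case=> g1 g2 h. split => //; split => //.
  case: h => [h|h]; first by exists 0; split => //; exists c.
  exists 1; split; first by rewrite e1.
  case: h => h; [exists (csrc S c) | exists (ctgt S c)]; split => //=; by [left|right].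
have L0 : forall c' v, supp S d.-1 d.-1 c' v <-> [/\ isgen S v, gdim S v = d.-1 & tsupp c' v].
  move=> c' v; split.
    case=> g1 [g2 [m [hm [b [hb ht]]]]]. move: hm; rewrite subnn leqn0 => /eqP hm.
    by move: hb; rewrite hm /= => hb; subst b.
  case=> g1 g2 h. split => //; split => //. exists 0; split => //. by exists c'.
split=> v; split.
- case/L0=> g1 g2 h; apply/L; split => //; by right; left.
- case/L=> g1 g2 h; apply/L0; split => //.
  have h' : tsupp c v by case: h => [h|h] //; apply: B.
  by case: (M v g1 g2 h').
- case/L0=> g1 g2 h; apply/L; split => //; by right; right.
- case/L=> g1 g2 h; apply/L0; split => //.
  have h' : tsupp c v by case: h => [h|h] //; apply: B.
  by case: (M v g1 g2 h').
Qed.
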